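(* Let $p\ne q$ be primes and $G=\mathbb{Z}_p^2\times\mathbb{Z}_q^2$. If $S\subseteq G$ is spectral and $|S|=pq$, then $S$ is a tile of $G$.
   Context: For $w=(u,v)\in G$ ($u\in\mathbb{Z}_p^2$, $v\in\mathbb{Z}_q^2$) define the character $\chi_w(a,b)=\exp\big(2\pi i(\tfrac{u\cdot a}{p}+\tfrac{v\cdot b}{q})\big)$, and $\chi(S)=\sum_{s\in S}\chi(s)$. $S$ is spectral if there is $\Lambda\subseteq G$ with $|\Lambda|=|S|$ and $\chi_{\lambda-\lambda'}(S)=0$ for all distinct $\lambda,\lambda'\in\Lambda$. $S$ is a tile if there is $T\subseteq G$ with $S+T=G$ and $|S||T|=|G|$. *)

(* Defs.v *)
From HB Require Import structures.
From mathcomp Require Import all_boot all_order all_algebra.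
From mathcomp Require Import reals trigo.
From mathcomp Require Import complex.
Set Implicit Arguments. Unset Strict Implicit. Unset Printing Implicit Defensive.
Import Order.TTheory GRing.Theory Num.Theory.
Local Open Scope ring_scope.

Definition Gty (p q : nat) : finType := (('Z_p * 'Z_p) * ('Z_q * 'Z_q))%type.

Definition Gadd (p q : nat) (x y : Gty p q) : Gty p q :=
  ((x.1.1 + y.1.1, x.1.2 + y.1.2), (x.2.1 + y.2.1, x.2.2 + y.2.2)).
Definition Gsub (p q : nat) (x y : Gty p q) : Gty p q :=
  ((x.1.1 - y.1.1, x.1.2 - y.1.2), (x.2.1 - y.2.1, x.2.2 - y.2.2)).

Definition expi (R : realType) (t : R) : R[i] :=
  (cos (2 * pi * t) +i* sin (2 * pi * t))%C.

(* chi_w(a,b) = exp(2 pi i (u.a/p + v.b/q)), w = (u,v), s = (a,b);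
   dot products computed as natural numbers from representatives in [0,p). *)
Definition chi (R : realType) (p q : nat) (w s : Gty p q) : R[i] :=
  expi (((w.1.1 : nat) * (s.1.1 : nat) + (w.1.2 : nat) * (s.1.2 : nat))%:R / p%:R
        + ((w.2.1 : nat) * (s.2.1 : nat) + (w.2.2 : nat) * (s.2.2 : nat))%:R / q%:R).

Definition chiS (R : realType) (p q : nat) (w : Gty p q) (S : {set Gty p q}) : R[i] :=
  \sum_(s in S) chi R w s.

Definition spectral (R : realType) (p q : nat) (S : {set Gty p q}) : Prop :=
  exists Lambda : {set Gty p q}, #|Lambda| = #|S| /\
    forall l l', l \in Lambda -> l' \in Lambda -> l != l' ->
      chiS R (Gsub l l') S = 0.

Definition tile (p q : nat) (S : {set Gty p q}) : Prop :=
  exists T : {set Gty p q},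
    [set Gadd s t | s in S, t in T] = [set: Gty p q] /\
    (#|S| * #|T| = #|Gty p q|)%N.

(* Main.v *)
Require Import Defs.
From HB Require Import structures.
From mathcomp Require Import all_boot all_order all_algebra all_field.
From mathcomp Require Import reals trigo complex.
From mathcomp Require Import ring lra zify.
Set Implicit Arguments. Unset Strict Implicit. Unset Printing Implicit Defensive.
Import Order.TTheory GRing.Theory Num.Theory.
Local Open Scope ring_scope.

Lemma Phi_root (F : fieldType) n (w : F) :
  n.-primitive_root w -> root (map_poly intr 'Phi_n) w.
Proof.
move=> pw; have n_gt0 := prim_order_gt0 pw.
have := prod_Cyclotomic n_gt0.
move/(congr1 (map_poly (intr : int -> F))).
rewrite rmorph_prod rmorphB rmorph1 /= map_polyXn => E.
have: root (\prod_(d <- divisors n) map_poly (intr : int -> F) 'Phi_d) w.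
  by rewrite E /root !hornerE (prim_expr_order pw) subrr.
rewrite /root horner_prod prodf_seq_eq0 => /hasP [d dn /= Hd].
have dvd: (d %| n)%N by rewrite dvdn_divisors.
have d_gt0 : (0 < d)%N := dvdn_gt0 n_gt0 dvd.
suff Edn : n = d by rewrite Edn.
have wd : w ^+ d = 1.
  have := prod_Cyclotomic d_gt0.
  move/(congr1 (map_poly (intr : int -> F))).
  rewrite rmorph_prod rmorphB rmorph1 /= map_polyXn.
  rewrite (big_rem d) -?dvdn_divisors //= => E2.
  have := congr1 (horner^~ w) E2; rewrite hornerM (eqP Hd) mul0r !hornerE.
  by move/esym/eqP; rewrite subr_eq0 => /eqP.
have : (n %| d)%N by rewrite (prim_order_dvd pw) wd.
by move=> ndv; apply/eqP; rewrite eqn_dvd ndv dvd.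
Qed.

Lemma key_conj (F : numFieldType) n (z : F) (Q : {poly rat}) k :
  n.-primitive_root z -> root (map_poly ratr Q) z -> coprime k n ->
  root (map_poly ratr Q) (z ^+ k).
Proof.
move=> pz rQ ckn.
pose Phi : {poly rat} := map_poly intr 'Phi_n.
have mapPhi (K : numFieldType) :
    map_poly (ratr : rat -> K) Phi = map_poly intr 'Phi_n.
  by rewrite -map_poly_comp; apply: eq_map_poly => a /=; rewrite rmorph_int.
suff /dvdpP [r ->] : (Phi %| Q)%R.
  rewrite rmorphM /= /root hornerM mapPhi.
  have pzk : n.-primitive_root (z ^+ k) by rewrite prim_root_exp_coprime.
  by rewrite (eqP (Phi_root pzk)) mulr0.
have [[u v] /= Huv] := Bezoutp Phi Q.
set g := gcdp Phi Q in Huv.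
have Phi_nz : Phi != 0.
  by apply: monic_neq0; apply: monic_map; apply: Cyclotomic_monic.
have g_nz : g != 0 by rewrite gcdp_eq0 negb_and Phi_nz.
have rg : root (map_poly (ratr : rat -> F) g) z.
  have := Huv; rewrite -(eqp_map (ratr : {rmorphism rat -> F})).
  move/eqp_root => <-.
  rewrite rmorphD !rmorphM /= /root hornerD !hornerM mapPhi (eqP (Phi_root pz)).
  by rewrite (eqP rQ) !mulr0 addr0.
have g_size : size g != 1%N.
  have := root_size_gt1 _ rg.
  rewrite map_poly_eq0 g_nz size_map_poly => /(_ isT).
  by case: (size g) => [|[|]].
have [w rw] : exists w : algC, root (map_poly ratr g) w.
  by apply/closed_rootP; rewrite size_map_poly.
have rPhiw : root (map_poly (ratr : rat -> algC) Phi) w.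
  have /dvdpP [s Es] : (g %| Phi)%R by rewrite dvdp_gcdl.
  by rewrite Es rmorphM /= /root hornerM (eqP rw) mulr0.
have [z0 pz0] := C_prim_root_exists (prim_order_gt0 pz).
have pw : n.-primitive_root w.
  by rewrite -(root_cyclotomic pz0) -(Cintr_Cyclotomic pz0) -mapPhi.
have [pw0 [Dpw _] Hdiv] := minCpolyP w.
have Epw : pw0 = Phi.
  apply: (map_inj_poly (fmorph_inj (ratr : {rmorphism rat -> algC}))
    (rmorph0 (ratr : {rmorphism rat -> algC}))).
  by rewrite -Dpw mapPhi (minCpoly_cyclotomic pw) (Cintr_Cyclotomic pw).
have : (Phi %| g)%R by rewrite -Epw -Hdiv.
by move/dvdp_trans; apply; rewrite dvdp_gcdr.
Qed.


Section Trig.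
Variable R : realType.

Lemma expiD (x y : R) : expi (x + y) = expi x * expi y.
Proof.
rewrite /expi mulrDr cosD sinD.
apply/eqP; rewrite eq_complex /=; apply/andP; split; apply/eqP.
  by [].
by rewrite addrC.
Qed.

Lemma expi0 : expi (0 : R) = 1.
Proof. by rewrite /expi mulr0 cos0 sin0. Qed.

Lemma expi1 : expi (1 : R) = 1.
Proof. by rewrite /expi mulr1 mulr_natl cos2pi sin2pi. Qed.

Lemma expi_natmul (k : nat) (x : R) : expi (k%:R * x) = expi x ^+ k.
Proof.
elim: k => [|k IH]; first by rewrite mul0r expi0 expr0.
by rewrite -addn1 natrD mulrDl mul1r expiD IH exprD expr1.
Qed.

Lemma expi_neq1 (t : R) : 0 < t < 1 -> expi t != 1.
Proof.
move=> /andP [t0 t1]; apply/negP => /eqP E.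
have := congr1 (@complex.Re R) E; rewrite /expi /=.
have E2 : 2 * pi * t = (pi * t) *+ 2 by rewrite -mulrA mulr_natl.
rewrite E2.
rewrite cos_mulr2n => Ec.
have c2 : cos (pi * t) ^+ 2 = 1.
  move: Ec; rewrite mulr2n; set c := cos _ ^+ 2; lra.
have s0 : sin (pi * t) ^+ 2 = 0 by rewrite sin2cos2 c2 subrr.
have : 0 < sin (pi * t).
  apply: sin_gt0_pi; rewrite mulr_gt0 ?pi_gt0 //=.
  by rewrite -{2}(mulr1 pi) ltr_pM2l ?pi_gt0.
by move/eqP: s0; rewrite sqrf_eq0 => /eqP ->; rewrite ltxx.
Qed.
End Trig.


Section Zm.
Variable m : nat.
Hypothesis mp : prime m.

Lemma m_gt1 : (1 < m)%N. Proof. exact: prime_gt1. Qed.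

Lemma card_Zm : #|'Z_m| = m.
Proof. by rewrite card_ord Zp_cast // m_gt1. Qed.

Lemma val_ZmD (x y : 'Z_m) : val (x + y) = ((val x + val y) %% m)%N.
Proof. by rewrite /=; congr (_ %% _)%N; apply: Zp_cast; exact: m_gt1. Qed.

Lemma val_ZmM (x y : 'Z_m) : val (x * y) = ((val x * val y) %% m)%N.
Proof. by rewrite /=; congr (_ %% _)%N; apply: Zp_cast; exact: m_gt1. Qed.

Lemma val_Zm_lt (x : 'Z_m) : (val x < m)%N.
Proof. by have := ltn_ord x; rewrite [X in (_ < X)%N -> _]Zp_cast // m_gt1. Qed.

Lemma Zm_unit (x : 'Z_m) : x != 0 -> x \is a GRing.unit.
Proof.
move=> nz; rewrite -[x]natr_Zp unitZpE ?m_gt1 // prime_coprime //.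
apply/negP => /dvdn_leq H.
have x0 : (0 < val x)%N by rewrite lt0n; apply: contra nz => /eqP h; apply/eqP/val_inj.
by move: (H x0); rewrite leqNgt val_Zm_lt.
Qed.

Lemma Zm_mulI (k : 'Z_m) a b : k != 0 -> (k * a == k * b) = (a == b).
Proof.
move=> nz; apply/eqP/eqP => [|->] //; exact: (mulrI (Zm_unit nz)).
Qed.

Definition Unif (T : finType) (X : {set T}) (f : T -> 'Z_m) : bool :=
  [forall x : 'Z_m, [forall y : 'Z_m,
     (\sum_(s in X) (f s == x) == \sum_(s in X) (f s == y))%N]].

Lemma UnifP (T : finType) (X : {set T}) f :
  reflect (forall x y, (\sum_(s in X) (f s == x) = \sum_(s in X) (f s == y))%N)
          (Unif X f).
Proof.
apply: (iffP forallP) => [H x y|H x]; first by have /forallP/(_ y)/eqP := H x.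
by apply/forallP => y; apply/eqP; apply: H.
Qed.

Lemma Unif_ext (T : finType) (X : {set T}) f g :
  (forall s, f s = g s) -> Unif X f = Unif X g.
Proof.
move=> E; apply/UnifP/UnifP => H x y.
  by rewrite -!(eq_bigr _ (fun s _ => congr1 (fun t => nat_of_bool (t == _)) (E s))).
by rewrite !(eq_bigr _ (fun s _ => congr1 (fun t => nat_of_bool (t == _)) (E s))).
Qed.

Lemma Unif_scale (T : finType) (X : {set T}) f k :
  k != 0 -> Unif X (fun s => k * f s) -> Unif X f.
Proof.
move=> nz /UnifP H; apply/UnifP => x y.
have := H (k * x) (k * y).
by rewrite !(eq_bigr _ (fun s _ => congr1 nat_of_bool (Zm_mulI _ _ nz))).
Qed.

Lemma not_Unif0 (T : finType) (X : {set T}) :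
  (0 < #|X|)%N -> ~~ Unif X (fun _ => 0).
Proof.
move=> X0; apply/negP => /UnifP /(_ 0 1).
have E1 : (\sum_(s in X) ((0%R : 'Z_m) == 1%R) = 0)%N.
  by rewrite big1 // => s _; rewrite eq_sym oner_eq0.
have E0 : (\sum_(s in X) ((0%R : 'Z_m) == 0%R) = #|X|)%N.
  by rewrite -sum1_card; apply: eq_bigr => s _; rewrite eqxx.
by rewrite E0 E1 => H; move: X0; rewrite H.
Qed.

Definition dP (u a : 'Z_m * 'Z_m) : 'Z_m := u.1 * a.1 + u.2 * a.2.

Lemma span (e d : 'Z_m * 'Z_m) : e != (0, 0) ->
  dP (e.2, - e.1) d = 0 -> exists k, d = (k * e.1, k * e.2).
Proof.
case: e d => e1 e2 [d1 d2] /= nz; rewrite /dP /= => H.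
have H' : e2 * d1 = e1 * d2 by apply/eqP; rewrite -subr_eq0 -H; apply/eqP; ring.
have [e1z|e1nz] := eqVneq e1 0.
  have e2nz : e2 != 0 by apply: contra nz => /eqP ->; rewrite e1z.
  exists (d2 / e2); congr pair.
    by rewrite e1z mulr0; apply: (mulrI (Zm_unit e2nz)); rewrite mulr0 H' e1z mul0r.
  by rewrite divrK // Zm_unit.
exists (d1 / e1); congr pair.
  by rewrite divrK // Zm_unit.
apply: (mulrI (Zm_unit e1nz)).
by rewrite -H' [d1 / e1 * e2]mulrAC [e1 * _]mulrC divrK ?Zm_unit // mulrC.
Qed.

Lemma dP_sub (u a b : 'Z_m * 'Z_m) :
  dP u (a.1 - b.1, a.2 - b.2) = dP u a - dP u b.
Proof. by rewrite /dP /=; ring. Qed.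

Lemma dP_perp (e : 'Z_m * 'Z_m) k : dP (e.2, - e.1) (k * e.1, k * e.2) = 0.
Proof. by rewrite /dP /=; ring. Qed.

Lemma scale_inj (e : 'Z_m * 'Z_m) k k' : e != (0, 0) ->
  (k * e.1, k * e.2) = (k' * e.1, k' * e.2) -> k = k'.
Proof.
case: e => e1 e2 /= nz H.
have E1 := congr1 fst H; have E2 := congr1 snd H; rewrite /= in E1 E2.
have [e1z|e1nz] := eqVneq e1 0.
  have e2nz : e2 != 0 by apply: contra nz => /eqP ->; rewrite e1z.
  exact: (mulIr (Zm_unit e2nz) E2).
exact: (mulIr (Zm_unit e1nz) E1).
Qed.

Lemma dir_contra (T : finType) (L : {set T}) (pi : T -> 'Z_m * 'Z_m) e d :
  (0 < #|L|)%N -> ~~ Unif L (fun l => dP e (pi l)) -> e != (0, 0) ->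
  dP (e.2, - e.1) d = 0 -> ~~ Unif L (fun l => dP d (pi l)).
Proof.
move=> L0 eU enz /(span enz) [k ->].
rewrite (Unif_ext _ (g := fun l => k * dP e (pi l))); last first.
  by move=> l; rewrite /dP /=; ring.
have [->|knz] := eqVneq k 0.
  rewrite (Unif_ext _ (g := fun _ => 0)) ?not_Unif0 // => l.
  by rewrite mul0r.
by apply: contra eU; apply: Unif_scale.
Qed.

End Zm.

Section Root.
Variables (F : numFieldType) (m : nat) (w : F).
Hypotheses (mp : prime m) (wp : m.-primitive_root w).

Definition E (x : 'Z_m) : F := w ^+ val x.

Lemma w_m : w ^+ m = 1. Proof. exact: prim_expr_order. Qed.

Lemma E_mod k : w ^+ (k %% m) = w ^+ k. Proof. exact: expr_mod w_m. Qed.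

Lemma ED x y : E (x + y) = E x * E y.
Proof. by rewrite /E val_ZmD // E_mod exprD. Qed.

Lemma EM x y : E (x * y) = E y ^+ val x.
Proof. by rewrite /E val_ZmM // E_mod mulnC exprM. Qed.

Lemma E0 : E 0 = 1. Proof. by rewrite /E expr0. Qed.

Lemma w_neq0 : w != 0.
Proof.
apply/negP => /eqP w0; have := w_m; rewrite w0 expr0n.
by case: m (prime_gt0 mp) => // n _ /eqP; rewrite eq_sym oner_eq0.
Qed.

Lemma E_neq0 x : E x != 0. Proof. by rewrite /E expf_neq0 // w_neq0. Qed.

Lemma EN x : E (- x) = (E x)^-1.
Proof.
by rewrite -[E (- x)]mulr1 -(mulfV (E_neq0 x)) mulrA -ED addNr E0 mul1r.
Qed.

Lemma E_pow_m x : E x ^+ m = 1.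
Proof. by rewrite /E exprAC w_m expr1n. Qed.

Lemma E_eq1 x : (E x == 1) = (x == 0).
Proof.
rewrite /E -(prim_order_dvd wp).
have [->|nz] := eqVneq x 0; first by rewrite dvdn0.
apply/negP => /dvdn_leq H.
have x0 : (0 < val x)%N by rewrite lt0n; apply: contra nz => /eqP h; apply/eqP/val_inj.
by move: (H x0); rewrite leqNgt val_Zm_lt.
Qed.

Lemma geo c : \sum_(i < m) E c ^+ i = (c == 0)%:R * m%:R.
Proof.
have [->|nz] := eqVneq c 0.
  by rewrite E0 mul1r (eq_bigr (fun _ => 1)) ?sumr_const ?card_ord // => i _; rewrite expr1n.
have := subrX1 (E c) m; rewrite E_pow_m subrr => /esym/eqP.
rewrite mulf_eq0 subr_eq0 E_eq1 (negPf nz) /= => /eqP ->.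
by rewrite mul0r.
Qed.

Lemma sum_Zm (f : nat -> F) : \sum_(x : 'Z_m) f (val x) = \sum_(i < m) f i.
Proof.
have -> : \sum_(x : 'Z_m) f (val x) = \sum_(i < (Zp_trunc m).+2) f i by [].
by rewrite -!(big_mkord xpredT) Zp_cast // m_gt1.
Qed.

Lemma sumEM c : \sum_(x : 'Z_m) E (x * c) = (c == 0)%:R * m%:R.
Proof.
rewrite (eq_bigr (fun x => E c ^+ val x)); last by move=> x _; rewrite EM.
by rewrite (sum_Zm (fun i => E c ^+ i)) geo.
Qed.

Lemma sumE : \sum_(x : 'Z_m) E x = 0.
Proof.
rewrite (eq_bigr (fun x => E (x * 1))); last by move=> x _; rewrite mulr1.
by rewrite sumEM oner_eq0 mul0r.
Qed.

Lemma geo_shift (a x : 'Z_m) : \sum_(i < m) E (a - x) ^+ i = (a == x)%:R * m%:R.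
Proof. by rewrite geo subr_eq0. Qed.

Lemma E_expand (a : 'Z_m) : E a = \sum_(x : 'Z_m) (a == x)%:R * E x.
Proof.
rewrite (bigD1 a) //= eqxx mul1r big1 ?addr0 // => x /negPf.
by rewrite eq_sym => ->; rewrite mul0r.
Qed.

Lemma Unif_sum (T : finType) (X : {set T}) f :
  Unif X f -> \sum_(s in X) E (f s) = 0.
Proof.
move=> /UnifP U.
rewrite (eq_bigr _ (fun s _ => E_expand (f s))) exchange_big /=.
rewrite (eq_bigr (fun x => (\sum_(s in X) (f s == 0%R))%:R * E x)).
  by rewrite -mulr_sumr sumE mulr0.
move=> x _; rewrite -mulr_suml -natr_sum (U x 0%R).
by rewrite natr_sum.
Qed.

Lemma exists_nonunif (T : finType) (X : {set T}) (pi : T -> 'Z_m * 'Z_m) :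
  ~~ (m * m %| #|X|)%N ->
  exists e, (e != (0, 0)) && ~~ Unif X (fun s => dP e (pi s)).
Proof.
move=> ndv.
case: (boolP [exists e, (e != (0, 0)) && ~~ Unif X (fun s => dP e (pi s))]).
  by move/existsP.
move/existsPn => H; exfalso; move: ndv; apply/negP; rewrite negbK.
pose S1 := \sum_(e : 'Z_m * 'Z_m) \sum_(s in X) E (dP e (pi s)).
have S1a : S1 = #|X|%:R.
  rewrite /S1 (bigD1 (0, 0)) //=.
  rewrite [Y in _ + Y]big1; last first.
    move=> e ne; apply: Unif_sum.
    by have := H e; rewrite ne /= negbK.
  rewrite addr0 (eq_bigr (fun _ => 1)) ?sumr_const //.
have S1b : S1 = (\sum_(s in X) (pi s == (0%R, 0%R)))%:R * (m * m)%:R.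
  rewrite /S1 exchange_big /= natr_sum mulr_suml; apply: eq_bigr => s _.
  rewrite (eq_bigr (fun e => E (e.1 * (pi s).1) * E (e.2 * (pi s).2))); last first.
    by move=> e _; rewrite /dP ED.
  rewrite -(pair_big xpredT xpredT (fun i j => E (i * (pi s).1) * E (j * (pi s).2))) /=.
  rewrite -big_distrlr /= !sumEM.
  case: (pi s) => a b /=; rewrite xpair_eqE natrM.
  by case: (a == 0); case: (b == 0); rewrite /= ?mul0r ?mul1r ?mulr0.
move: S1a; rewrite S1b -natrM => /eqP; rewrite eqr_nat => /eqP <-.
by rewrite dvdn_mull.
Qed.

End Root.

Lemma count_lemma (p q : nat) (N : 'Z_p -> 'Z_q -> nat) :
  prime p -> prime q -> p != q ->
  (forall x1 x0 y1 y0, N x1 y1 + N x0 y0 = N x1 y0 + N x0 y1)%N ->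
  (\sum_x \sum_y N x y = p * q)%N ->
  (forall x x', \sum_y N x y = \sum_y N x' y)%N \/
  (forall y y', \sum_x N x y = \sum_x N x y')%N.
Proof.
move=> pp pq pne A Tot.
case: (@arg_minnP _ ((0%R, 0%R) : 'Z_p * 'Z_q) xpredT (fun z => N z.1 z.2)) => //.
move=> [x0 y0] _ /= Hmin.
set K := N x0 y0.
have Ed x y : N x y = (K + (N x y0 - K) + (N x0 y - K))%N.
  have := A x x0 y y0; have := Hmin (x, y0) isT; have := Hmin (x0, y) isT.
  rewrite /= -/K; lia.
set D := (\sum_x (N x y0 - K))%N.
set C := (\sum_y (N x0 y - K))%N.
have Tot2 : (p * q = p * q * K + q * D + p * C)%N.
  rewrite -[in LHS]Tot.
  rewrite (eq_bigr (fun x => q * K + q * (N x y0 - K) + C)%N); last first.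
    move=> x _; rewrite (eq_bigr _ (fun y _ => Ed x y)) !big_split /=.
    by rewrite !sum_nat_const card_Zm.
  rewrite !big_split /= !sum_nat_const card_Zm // -big_distrr /=.
  rewrite -/D; lia.
have [D0|Dpos] := eqVneq D 0%N.
  left => x x'.
  have E0 z : (N z y0 - K = 0)%N.
    by move/eqP: D0; rewrite sum_nat_eq0 => /forallP /(_ z) /eqP.
  by apply: eq_bigr => y _; rewrite Ed E0 [in RHS]Ed E0.
have [C0|Cpos] := eqVneq C 0%N.
  right => y y'.
  have E0 z : (N x0 z - K = 0)%N.
    by move/eqP: C0; rewrite sum_nat_eq0 => /forallP /(_ z) /eqP.
  by apply: eq_bigr => x _; rewrite Ed E0 [in RHS]Ed E0.
exfalso.
have p0 := prime_gt0 pp; have q0 := prime_gt0 pq.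
have K0 : K = 0%N.
  case: (posnP K) => // Kp; exfalso.
  have : (p * q <= p * q * K)%N by rewrite leq_pmulr.
  have : (0 < q * D)%N by rewrite muln_gt0 q0 lt0n.
  lia.
rewrite K0 muln0 add0n in Tot2.
have Dle : (D <= p)%N.
  by rewrite -(leq_pmul2l q0) [X in (_ <= X)%N]mulnC Tot2 leq_addr.
have qdvd : (q %| C)%N.
  have cop : coprime q p by rewrite prime_coprime // dvdn_prime2 // eq_sym.
  rewrite -(Gauss_dvdr _ cop).
  have -> : (p * C = q * (p - D))%N by rewrite mulnBr [(q * p)%N]mulnC Tot2; lia.
  exact: dvdn_mulr.
have qC : (q <= C)%N by apply: dvdn_leq => //; rewrite lt0n.
have : (p * q <= p * C)%N by rewrite leq_pmul2l.
have : (0 < q * D)%N by rewrite muln_gt0 q0 lt0n.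
lia.
Qed.

Lemma E_pow_mod (F : numFieldType) (m : nat) (w : F) (wp : m.-primitive_root w)
  (x : 'Z_m) k : E w x ^+ (k %% m) = E w x ^+ k.
Proof. exact: expr_mod (E_pow_m wp x). Qed.

Lemma sum_eq1 m (a : 'Z_m) : (\sum_(x : 'Z_m) (a == x) = 1)%N.
Proof.
rewrite (bigD1 a) //= eqxx big1 ?addn0 // => x /negPf.
by rewrite eq_sym => ->.
Qed.


Section Main.
Variables (R : realType) (p q : nat).
Hypotheses (pp : prime p) (pq : prime q) (pne : p != q).

Lemma p0 : (0 < p)%N. Proof. exact: prime_gt0. Qed.
Lemma q0 : (0 < q)%N. Proof. exact: prime_gt0. Qed.
Lemma n0 : (0 < p * q)%N. Proof. by rewrite muln_gt0 p0 q0. Qed.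

Definition zeta : R[i] := expi ((p * q)%:R^-1).

Lemma zeta_pow k : zeta ^+ k = expi (k%:R * (p * q)%:R^-1).
Proof. by rewrite /zeta expi_natmul. Qed.

Lemma zeta_prim : (p * q).-primitive_root zeta.
Proof.
apply/andP; split; first exact: n0.
apply/forallP => i; apply/eqP; rewrite unity_rootE zeta_pow.
have nR : (p * q)%:R != 0 :> R by rewrite pnatr_eq0 -lt0n n0.
have [->|ne] := eqVneq i.+1 (p * q)%N.
  by rewrite mulfV // expi1 eqxx.
apply/negbTE/expi_neq1; apply/andP; split.
  by rewrite mulr_gt0 // ?invr_gt0 ltr0n // n0.
rewrite ltr_pdivrMr ?ltr0n ?n0 // mul1r ltr_nat ltn_neqAle ne /=.
by have := ltn_ord i.
Qed.

Definition zp := zeta ^+ q.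
Definition zq := zeta ^+ p.

Lemma zp_prim : p.-primitive_root zp.
Proof.
rewrite /zp; have := exp_prim_root zeta_prim q.
by rewrite gcdnMl mulnK ?q0.
Qed.

Lemma zq_prim : q.-primitive_root zq.
Proof.
rewrite /zq; have := exp_prim_root zeta_prim p.
by rewrite mulnC gcdnMl mulnK ?p0.
Qed.

Definition psi (w s : Gty p q) : R[i] :=
  E zp (dP w.1 s.1) * E zq (dP w.2 s.2).

Lemma val_dP m (mp : prime m) (u a : 'Z_m * 'Z_m) :
  val (dP u a) = (((u.1 : nat) * (a.1 : nat) + (u.2 : nat) * (a.2 : nat)) %% m)%N.
Proof. by rewrite /dP val_ZmD // !val_ZmM // modnDm. Qed.

Lemma chi_psi w s : chi R w s = psi w s.
Proof.
rewrite /chi /psi.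
set A := (_ * _ + _ * _)%N; set B := (_ * _ + _ * _)%N.
have pR : p%:R != 0 :> R by rewrite pnatr_eq0 -lt0n p0.
have qR : q%:R != 0 :> R by rewrite pnatr_eq0 -lt0n q0.
have -> : A%:R / p%:R + B%:R / q%:R = (q * A + p * B)%:R * (p * q)%:R^-1 :> R.
  rewrite natrD !natrM; field; by apply/andP.
rewrite expi_natmul -/zeta exprD !exprM -/zp -/zq /E.
rewrite !val_dP // -/A -/B.
by rewrite (E_mod zp_prim) (E_mod zq_prim).
Qed.

Lemma psi_sym w s : psi w s = psi s w.
Proof. by rewrite /psi /dP ![s.1.1 * _]mulrC ![s.1.2 * _]mulrC ![s.2.1 * _]mulrC ![s.2.2 * _]mulrC. Qed.

Lemma psi_neq0 w s : psi w s != 0.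
Proof. by rewrite /psi mulf_neq0 // E_neq0 ?zp_prim ?zq_prim. Qed.

Lemma psi_sub l l' s : psi (Gsub l l') s = psi l s * (psi l' s)^-1.
Proof.
rewrite /psi.
have -> : dP (Gsub l l').1 s.1 = dP l.1 s.1 - dP l'.1 s.1 by rewrite /dP /=; ring.
have -> : dP (Gsub l l').2 s.2 = dP l.2 s.2 - dP l'.2 s.2 by rewrite /dP /=; ring.
rewrite [E zp (_ - _)](ED pp zp_prim) [E zq (_ - _)](ED pq zq_prim).
by rewrite (EN pp zp_prim) (EN pq zq_prim) invfM mulrACA.
Qed.


Lemma V1 (X : {set Gty p q}) w i j :
  \sum_(s in X) psi w s = 0 -> (0 < i < p)%N -> (0 < j < q)%N ->
  \sum_(s in X) E zp (dP w.1 s.1) ^+ i * E zq (dP w.2 s.2) ^+ j = 0.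
Proof.
move=> H /andP [i0 ip] /andP [j0 jq].
pose a (s : Gty p q) := val (dP w.1 s.1); pose b (s : Gty p q) := val (dP w.2 s.2).
have psiE s : psi w s = zeta ^+ (q * a s + p * b s) by rewrite /psi /E exprD !exprM.
pose Q : {poly rat} := \sum_(s in X) 'X^(q * a s + p * b s).
have mapQ (z : R[i]) :
    (map_poly ratr Q).[z] = \sum_(s in X) z ^+ (q * a s + p * b s).
  rewrite rmorph_sum horner_sum; apply: eq_bigr => s _; by rewrite /= map_polyXn hornerXn.
have r0 : root (map_poly ratr Q) zeta.
  by rewrite /root mapQ -(eq_bigr _ (fun s _ => psiE s)) H.
have cop : coprime p q by rewrite prime_coprime // dvdn_prime2.
set k := chinese p q i j.
have kp : (k %% p = i)%N by rewrite chinese_modl // modn_small.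
have kq : (k %% q = j)%N by rewrite chinese_modr // modn_small.
have ck : coprime k (p * q).
  rewrite coprimeMr -(coprime_modl k p) -(coprime_modl k q) kp kq.
  by rewrite ![coprime _ p]coprime_sym ![coprime _ q]coprime_sym !prime_coprime // !gtnNdvd.
have := key_conj zeta_prim r0 ck; rewrite /root mapQ => /eqP H2; rewrite -[in RHS]H2.
apply: eq_bigr => s _.
rewrite exprD.
have -> : (zeta ^+ k) ^+ (q * a s) = E zp (dP w.1 s.1) ^+ k.
  by rewrite /E /zp -!exprM mulnCA [(k * _)%N]mulnC.
have -> : (zeta ^+ k) ^+ (p * b s) = E zq (dP w.2 s.2) ^+ k.
  by rewrite /E /zq -!exprM mulnCA [(k * _)%N]mulnC.
by rewrite -(E_pow_mod zp_prim (dP w.1 s.1) k) kp -(E_pow_mod zq_prim (dP w.2 s.2) k) kq.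
Qed.


Definition aF (w s : Gty p q) := dP w.1 s.1.
Definition bF (w s : Gty p q) := dP w.2 s.2.

Definition Ncnt (X : {set Gty p q}) (w : Gty p q) (x : 'Z_p) (y : 'Z_q) : nat :=
  \sum_(s in X) ((aF w s == x) && (bF w s == y)).

Lemma V2 (X : {set Gty p q}) w : \sum_(s in X) psi w s = 0 ->
  forall x1 x0 y1 y0,
  (Ncnt X w x1 y1 + Ncnt X w x0 y0 = Ncnt X w x1 y0 + Ncnt X w x0 y1)%N.
Proof.
move=> H x1 x0 y1 y0.
pose f (s : Gty p q) (i : nat) := E zp (aF w s - x1) ^+ i - E zp (aF w s - x0) ^+ i.
pose g (s : Gty p q) (j : nat) := E zq (bF w s - y1) ^+ j - E zq (bF w s - y0) ^+ j.
pose T := \sum_(i < p) \sum_(j < q) \sum_(s in X) f s i * g s j.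
have T0 : T = 0.
  rewrite /T big1 // => i _; rewrite big1 // => j _.
  have [i0|inz] := eqVneq (i : nat) 0%N.
    by rewrite big1 // => s _; rewrite /f i0 !expr0 subrr mul0r.
  have [j0|jnz] := eqVneq (j : nat) 0%N.
    by rewrite big1 // => s _; rewrite /g j0 !expr0 subrr mulr0.
  have hi : (0 < i < p)%N by rewrite lt0n inz ltn_ord.
  have hj : (0 < j < q)%N by rewrite lt0n jnz ltn_ord.
  have -> : \sum_(s in X) f s i * g s j =
      (\sum_(s in X) E zp (dP w.1 s.1) ^+ i * E zq (dP w.2 s.2) ^+ j) *
      ((E zp (- x1) ^+ i - E zp (- x0) ^+ i) * (E zq (- y1) ^+ j - E zq (- y0) ^+ j)).
    rewrite mulr_suml; apply: eq_bigr => s _; rewrite /f /g.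
    rewrite (ED pp zp_prim (aF w s) (- x1)) (ED pp zp_prim (aF w s) (- x0)).
    rewrite (ED pq zq_prim (bF w s) (- y1)) (ED pq zq_prim (bF w s) (- y0)).
    rewrite !exprMn /aF /bF; ring.
  by rewrite (V1 H hi hj) mul0r.
have Ef s : \sum_(i < p) f s i = ((aF w s == x1)%:R - (aF w s == x0)%:R) * p%:R.
  by rewrite /f sumrB !(geo_shift pp zp_prim) mulrBl.
have Eg s : \sum_(j < q) g s j = ((bF w s == y1)%:R - (bF w s == y0)%:R) * q%:R.
  by rewrite /g sumrB !(geo_shift pq zq_prim) mulrBl.
have T1 : T = (p * q)%:R * ((Ncnt X w x1 y1 + Ncnt X w x0 y0)%:R
                            - (Ncnt X w x1 y0 + Ncnt X w x0 y1)%:R).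
  have -> : T = \sum_(s in X) (\sum_(i < p) f s i) * (\sum_(j < q) g s j).
    rewrite /T.
    under eq_bigr => i _ do rewrite exchange_big.
    rewrite exchange_big; apply: eq_bigr => s _.
    by rewrite big_distrlr.
  under eq_bigr => s _ do rewrite Ef Eg.
  rewrite /Ncnt !natrD !natr_sum -!big_split -sumrB mulr_sumr.
  apply: eq_bigr => s _.
  rewrite /= -!mulnb !natrM; ring.
have nz : (p * q)%:R != 0 :> R[i] by rewrite pnatr_eq0 -lt0n n0.
move: T0; rewrite T1 => /eqP; rewrite mulf_eq0 (negbTE nz) /= subr_eq0 eqr_nat.
by move/eqP.
Qed.


Lemma Vlem (X : {set Gty p q}) w : #|X| = (p * q)%N ->
  \sum_(s in X) psi w s = 0 -> Unif X (aF w) || Unif X (bF w).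
Proof.
move=> HX H.
have A := V2 H.
have Tot : (\sum_x \sum_y Ncnt X w x y = p * q)%N.
  rewrite -HX -sum1_card /Ncnt.
  under eq_bigr => x _ do rewrite exchange_big.
  rewrite exchange_big /=; apply: eq_bigr => s _.
  under eq_bigr => x _ do under eq_bigr => y _ do rewrite -mulnb.
  under eq_bigr => x _ do rewrite -big_distrr /= sum_eq1 muln1.
  by rewrite sum_eq1.
have [Hr|Hc] := count_lemma pp pq pne A Tot.
  apply/orP; left; apply/UnifP => x x'.
  have row z : (\sum_y Ncnt X w z y = \sum_(s in X) (aF w s == z))%N.
    rewrite /Ncnt exchange_big /=; apply: eq_bigr => s _.
    under eq_bigr => y _ do rewrite -mulnb.
    by rewrite -big_distrr /= sum_eq1 muln1.
  by rewrite -!row; apply: Hr.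
apply/orP; right; apply/UnifP => y y'.
have col z : (\sum_x Ncnt X w x z = \sum_(s in X) (bF w s == z))%N.
  rewrite /Ncnt exchange_big /=; apply: eq_bigr => s _.
  under eq_bigr => x _ do rewrite -mulnb.
  by rewrite -big_distrl /= sum_eq1 mul1n.
by rewrite -!col; apply: Hc.
Qed.


Lemma duality (S L : {set Gty p q}) :
  #|L| = #|S| -> (0 < #|S|)%N ->
  (forall l l', l \in L -> l' \in L -> l != l' ->
     \sum_(s in S) psi (Gsub l l') s = 0) ->
  forall s s', s \in S -> s' \in S -> s != s' ->
     \sum_(l in L) psi (Gsub s s') l = 0.
Proof.
move=> HL S0 Horth s s' Hs Hs' ss'.
set n := #|S| in HL S0 *.
pose lam (i : 'I_n) := nth s (enum L) i.
pose sv (j : 'I_n) := nth s (enum S) j.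
have sizeL : size (enum L) = n by rewrite -cardE HL.
have sizeS : size (enum S) = n by rewrite -cardE.
have sumL (F : Gty p q -> R[i]) : \sum_(l in L) F l = \sum_(i < n) F (lam i).
  by rewrite -big_enum (big_nth s) sizeL big_mkord.
have sumS (F : Gty p q -> R[i]) : \sum_(x in S) F x = \sum_(j < n) F (sv j).
  by rewrite -big_enum (big_nth s) sizeS big_mkord.
have lam_inj : injective lam.
  move=> i j /eqP; rewrite /lam nth_uniq ?enum_uniq ?sizeL ?ltn_ord //.
  by move/eqP/val_inj.
have lamL i : lam i \in L by rewrite /lam -mem_enum mem_nth // sizeL ltn_ord.
have nR : n%:R != 0 :> R[i] by rewrite pnatr_eq0 -lt0n.
pose A := \matrix_(i < n, j < n) psi (lam i) (sv j).
pose B := \matrix_(j < n, i < n) (psi (lam i) (sv j))^-1.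
have AB : A *m B = n%:R%:M.
  apply/matrixP => i i'; rewrite !mxE.
  rewrite (eq_bigr (fun j => psi (Gsub (lam i) (lam i')) (sv j))); last first.
    by move=> j _; rewrite !mxE psi_sub.
  rewrite -(sumS (fun x => psi (Gsub (lam i) (lam i')) x)).
  have [<-|ne] := eqVneq i i'.
    rewrite (eq_bigr (fun _ => 1)) ?sumr_const //.
    by move=> x _; rewrite psi_sub mulfV // psi_neq0.
  rewrite mulr0n Horth //.
  by apply: contra ne => /eqP /lam_inj ->.
have BA : B *m A = n%:R%:M.
  have H1 : A *m (n%:R^-1 *: B) = 1%:M.
    by rewrite -scalemxAr AB scale_scalar_mx mulVf.
  have := mulmx1C H1; rewrite -scalemxAl => H2.
  have := congr1 (fun M => n%:R *: M) H2; rewrite /= scalerA mulfV // scale1r => ->.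
  by rewrite scalemx1.
have js : (index s (enum S) < n)%N by rewrite -sizeS index_mem mem_enum.
have js' : (index s' (enum S) < n)%N by rewrite -sizeS index_mem mem_enum.
pose j := Ordinal js; pose j' := Ordinal js'.
have svj : sv j = s by rewrite /sv /= nth_index // mem_enum.
have svj' : sv j' = s' by rewrite /sv /= nth_index // mem_enum.
have jj : j' != j by apply: contra ss' => /eqP E; rewrite -svj -svj' E.
have := congr1 (fun M : 'M[R[i]]_n => M j' j) BA; rewrite !mxE (negbTE jj) mulr0n => E3; rewrite -[in RHS]E3.
rewrite sumL; apply: eq_bigr => i _; rewrite !mxE svj svj'.
by rewrite psi_sub !(psi_sym _ (lam i)) mulrC.
Qed.


Lemma main_tile (S : {set Gty p q}) : spectral R S -> #|S| = (p * q)%N -> tile S.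
Proof.
move=> [L [HL Horth]] HS.
have Horth' : forall l l', l \in L -> l' \in L -> l != l' ->
    \sum_(s in S) psi (Gsub l l') s = 0.
  move=> l l' Hl Hl' ne; have := Horth l l' Hl Hl' ne.
  by rewrite /chiS (eq_bigr _ (fun s _ => chi_psi _ s)).
have S0 : (0 < #|S|)%N by rewrite HS n0.
have Hdual := duality HL S0 Horth'.
have HLc : #|L| = (p * q)%N by rewrite HL HS.
have L0 : (0 < #|L|)%N by rewrite HLc n0.
have ndvp : ~~ (p * p %| #|L|)%N.
  by rewrite HLc dvdn_pmul2l ?p0 // dvdn_prime2 //.
have ndvq : ~~ (q * q %| #|L|)%N.
  by rewrite HLc [(p * q)%N]mulnC dvdn_pmul2l ?q0 // dvdn_prime2 // eq_sym.
have [e /andP [enz eU]] := exists_nonunif pp zp_prim (fun l : Gty p q => l.1) ndvp.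
have [e' /andP [enz' eU']] := exists_nonunif pq zq_prim (fun l : Gty p q => l.2) ndvq.
pose f (s : Gty p q) : 'Z_p * 'Z_q := (dP (e.2, - e.1) s.1, dP (e'.2, - e'.1) s.2).
have fsub g s : f (Gsub g s) = ((f g).1 - (f s).1, (f g).2 - (f s).2).
  by rewrite /f /Gsub /= !dP_sub.
have finj : {in S &, injective f}.
  move=> s s' Hs Hs' Efs.
  have [//|ne] := eqVneq s s'.
  have [E1 E2] : (f s).1 = (f s').1 /\ (f s).2 = (f s').2 by rewrite Efs.
  have := Vlem HLc (Hdual s s' Hs Hs' ne) => /orP [U|U].
    have := dir_contra pp L0 eU enz (d := (Gsub s s').1).
    rewrite -/(aF (Gsub s s')).
    have -> : dP (e.2, - e.1) (Gsub s s').1 = 0.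
      by have H1 : (f (Gsub s s')).1 = 0 by rewrite fsub E1 subrr.
    by move=> /(_ erefl); rewrite U.
  have := dir_contra pq L0 eU' enz' (d := (Gsub s s').2).
  have -> : dP (e'.2, - e'.1) (Gsub s s').2 = 0.
    by have H2 : (f (Gsub s s')).2 = 0 by rewrite fsub E2 subrr.
  by move=> /(_ erefl); rewrite -/(bF (Gsub s s')) U.
have cardf : #|f @: S| = (p * q)%N by rewrite card_in_imset.
have fS : f @: S = setT.
  by apply/eqP; rewrite eqEcard subsetT /= cardsT card_prod !card_Zm // cardf.
pose T := [set t | f t == (0, 0)].
pose gT (kl : 'Z_p * 'Z_q) : Gty p q :=
  ((kl.1 * e.1, kl.1 * e.2), (kl.2 * e'.1, kl.2 * e'.2)).
have gT_inj : injective gT.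
  move=> [k l] [k' l'] H.
  have Ha := congr1 fst H; have Hb := congr1 snd H; rewrite /= in Ha Hb.
  by rewrite (scale_inj pp enz Ha) (scale_inj pq enz' Hb).
have TE : T = gT @: setT.
  apply/setP => t; rewrite inE; apply/eqP/imsetP.
    move=> Ft.
    have Ft1 := congr1 fst Ft; have Ft2 := congr1 snd Ft; rewrite /= in Ft1 Ft2.
    have [k Ek] := span pp enz Ft1.
    have [l El] := span pq enz' Ft2.
    exists (k, l) => //; rewrite /gT /= -Ek -El.
    by case: t {Ft Ft1 Ft2 Ek El}.
  move=> [[k l] _ ->]; rewrite /f /gT /=.
  by rewrite !dP_perp.
exists T; split.
  apply/setP => g; rewrite inE; apply/imset2P.
  have : f g \in f @: S by rewrite fS inE.
  case/imsetP => s Hs Efg.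
  exists s (Gsub g s) => //.
    rewrite inE fsub -Efg !subrr; by [].
  case: g s {Hs Efg} => [[a b] [c d]] [[a' b'] [c' d']].
  by rewrite /Gadd /Gsub /= !subrKC.
rewrite TE card_imset // cardsT HS !card_prod !card_Zm //.
by rewrite mulnACA.
Qed.

End Main.

Theorem proposition4p3 (R : realType) (p q : nat) :
  prime p -> prime q -> p <> q ->
  forall S : {set Gty p q},
    spectral R S -> #|S| = (p * q)%N -> tile S.
Proof.
move=> pp pq pne S.
apply: main_tile => //.
by apply/eqP.
Qed.
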